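(* Let $\mathsf{InSeq}$ be the type of initial sequences in $\{-,+\}$ (with $-<+$), i.e. sequences $(u_n)_{n<\alpha}$ indexed by the ordinals below some ordinal $\alpha$. Order them by: $(u_n)_{n<\alpha}<(v_n)_{n<\alpha'}$ iff (propositionally truncated) there is an ordinal $i$ such that $u_j=v_j$ for all $j<i$ and $u_i<v_i$, where a nonexistent term is treated as a value $\emptyset$ with $-<\emptyset<+$, and where $\neg(()<())$ for the empty sequence $()$. Then $<$ on $\mathsf{InSeq}$ is cotransitive: for all $u,v,w:\mathsf{InSeq}$, $u<v$ implies $u<w$ or $w<v$.
   Context: Ordinals are in the sense of the HoTT book: a set with a well-founded, extensional, transitive relation $<$. *)

(* Defs.v *)
(* Ordinals in the sense of the HoTT book. *)

Record Ordinal : Type := {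
  carrier :> Type;
  olt : carrier -> carrier -> Prop;
  olt_wf : well_founded olt;
  olt_ext : forall x y : carrier, (forall z, olt z x <-> olt z y) -> x = y;
  olt_trans : forall x y z : carrier, olt x y -> olt y z -> olt x z
}.

Definition rel_iso (A : Type) (RA : A -> A -> Prop) (B : Type) (RB : B -> B -> Prop) : Prop :=
  exists (f : A -> B) (g : B -> A),
    (forall x, g (f x) = x) /\ (forall y, f (g y) = y) /\
    (forall x y, RA x y <-> RB (f x) (f y)).

Definition seg_carrier (al : Ordinal) (a : al) : Type := { x : al | olt al x a }.
Definition seg_lt (al : Ordinal) (a : al) (x y : seg_carrier al a) : Prop :=
  olt al (proj1_sig x) (proj1_sig y).

Definition ord_at (i al : Ordinal) (a : al) : Prop :=
  rel_iso (carrier i) (olt i) (seg_carrier al a) (seg_lt al a).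

Definition ord_lt (i al : Ordinal) : Prop := exists a : al, ord_at i al a.

Inductive Sign : Type := Minus | Plus.

(** Extended values: [Some s] for an existing term, [None] for the absent term
    (the value "empty"), with Minus < None < Plus. *)
Definition ext_lt (x y : option Sign) : Prop :=
  match x, y with
  | Some Minus, None => True
  | None, Some Plus => True
  | Some Minus, Some Plus => True
  | _, _ => False
  end.

(** Initial sequences: an ordinal alpha together with a sequence indexed by
    the ordinals below alpha (equivalently, by the elements of alpha). *)
Definition InSeq : Type := { al : Ordinal & carrier al -> Sign }.

Definition term (u : InSeq) (i : Ordinal) (x : option Sign) : Prop :=
  match x with
  | Some s => exists a : projT1 u, ord_at i (projT1 u) a /\ projT2 u a = s
  | None => forall a : projT1 u, ~ ord_at i (projT1 u) a
  end.

Definition inseq_lt (u v : InSeq) : Prop :=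
  exists i : Ordinal,
    (forall j : Ordinal, ord_lt j i -> forall x, term u j x <-> term v j x) /\
    (exists x y, term u i x /\ term v i y /\ ext_lt x y).

(* Main.v *)
Require Import Defs.
From Stdlib Require Import Classical ProofIrrelevance Wellfounded.Inverse_Image.

Lemma iso_refl (A : Type) (R : A -> A -> Prop) : rel_iso A R A R.
Proof. exists (fun x => x), (fun x => x). repeat split; tauto. Qed.

Lemma iso_sym A RA B RB : rel_iso A RA B RB -> rel_iso B RB A RA.
Proof.
  intros [f [g [H1 [H2 H3]]]]. exists g, f. repeat split; auto.
  - intros H. apply H3. rewrite !H2. exact H.
  - intros H. apply H3 in H. rewrite !H2 in H. exact H.
Qed.

Lemma iso_trans A RA B RB C RC :
  rel_iso A RA B RB -> rel_iso B RB C RC -> rel_iso A RA C RC.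
Proof.
  intros [f [g [H1 [H2 H3]]]] [f' [g' [H1' [H2' H3']]]].
  exists (fun x => f' (f x)), (fun y => g (g' y)). repeat split.
  - intros x. rewrite H1'. apply H1.
  - intros y. rewrite H2. apply H2'.
  - intros H. apply H3', H3, H.
  - intros H. apply H3, H3', H.
Qed.

Definition Sg (al : Ordinal) (c : al) : Ordinal.
Proof.
  refine {| carrier := seg_carrier al c; olt := seg_lt al c |}.
  - unfold seg_lt. apply (wf_inverse_image _ _ (olt al) (@proj1_sig _ _)).
    apply olt_wf.
  - intros [x px] [y py] H. unfold seg_lt in H; simpl in H.
    assert (x = y).
    { apply olt_ext. intros z. split; intros Hz.
      - apply (H (exist _ z (olt_trans al _ _ _ Hz px))). exact Hz.
      - apply (H (exist _ z (olt_trans al _ _ _ Hz py))). exact Hz. }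
    subst y. f_equal. apply proof_irrelevance.
  - intros x y z. unfold seg_lt. apply olt_trans.
Defined.

Lemma seg_iso_eq (al : Ordinal) (a b : al) :
  rel_iso (seg_carrier al a) (seg_lt al a) (seg_carrier al b) (seg_lt al b) -> a = b.
Proof.
  intros [h [k [Hkh [Hhk Hlt]]]].
  assert (Hc : forall x (p : olt al x a), proj1_sig (h (exist _ x p)) = x).
  { intros x. induction x as [x IH] using (well_founded_ind (olt_wf al)).
    intros p. apply olt_ext. intros z. split; intros Hz.
    - set (qz := olt_trans al _ _ _ Hz (proj2_sig (h (exist _ x p)))).
      set (e := k (exist _ z qz)).
      assert (He : h e = exist _ z qz) by apply Hhk.
      assert (Hlt' : seg_lt al a e (exist _ x p)).
      { apply Hlt. rewrite He. exact Hz. }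
      unfold seg_lt in Hlt'; simpl in Hlt'.
      destruct e as [z' pz'] eqn:Ee.
      pose proof (IH z' Hlt' pz') as Hz'. rewrite He in Hz'. simpl in Hz'.
      subst z'. exact Hlt'.
    - pose (pz := olt_trans al _ _ _ Hz p).
      assert (Hlt' : seg_lt al a (exist _ z pz) (exist _ x p)) by exact Hz.
      apply Hlt in Hlt'. unfold seg_lt in Hlt'.
      rewrite (IH z Hz pz) in Hlt'. exact Hlt'. }
  apply olt_ext. intros z. split; intros Hz.
  - rewrite <- (Hc z Hz). apply proj2_sig.
  - set (e := k (exist _ z Hz)).
    assert (He : h e = exist _ z Hz) by apply Hhk.
    destruct e as [z' pz'] eqn:Ee.
    pose proof (Hc z' pz') as H'. rewrite He in H'. simpl in H'. subst z'. exact pz'.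
Qed.

Lemma ord_at_unique (j al : Ordinal) (a b : al) :
  ord_at j al a -> ord_at j al b -> a = b.
Proof.
  intros H1 H2. apply seg_iso_eq. exact (iso_trans _ _ _ _ _ _ (iso_sym _ _ _ _ H1) H2).
Qed.

Lemma term_total u j : exists x, term u j x.
Proof.
  destruct (classic (exists a : projT1 u, ord_at j (projT1 u) a)) as [[a Ha]|Hn].
  - exists (Some (projT2 u a)). simpl. exists a. auto.
  - exists None. simpl. intros a Ha. apply Hn. exists a. exact Ha.
Qed.

Lemma term_func u j x x' : term u j x -> term u j x' -> x = x'.
Proof.
  destruct x as [s|], x' as [s'|]; simpl.
  - intros [a [Ha Hs]] [b [Hb Hs']].
    pose proof (ord_at_unique _ _ _ _ Ha Hb). subst. reflexivity.
  - intros [a [Ha _]] H. exfalso. exact (H a Ha).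
  - intros H [a [Ha _]]. exfalso. exact (H a Ha).
  - auto.
Qed.

Lemma term_iso u (j j' : Ordinal) x :
  rel_iso j (olt j) j' (olt j') -> term u j x -> term u j' x.
Proof.
  intros H. destruct x as [s|]; simpl.
  - intros [a [Ha Hs]]. exists a. split; auto.
    exact (iso_trans _ _ _ _ _ _ (iso_sym _ _ _ _ H) Ha).
  - intros Hn a Ha. apply (Hn a). exact (iso_trans _ _ _ _ _ _ H Ha).
Qed.

Definition agree (u w : InSeq) (j : Ordinal) := forall x, term u j x <-> term w j x.

Lemma agree_iso u w (j j' : Ordinal) :
  rel_iso j (olt j) j' (olt j') -> agree u w j -> agree u w j'.
Proof.
  intros H Ha x. pose proof (iso_sym _ _ _ _ H) as H'. split; intros Hx.
  - apply (term_iso _ _ _ _ H), Ha, (term_iso _ _ _ _ H'), Hx.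
  - apply (term_iso _ _ _ _ H), Ha, (term_iso _ _ _ _ H'), Hx.
Qed.

Lemma lt_seg (i : Ordinal) (c : i) (j : Ordinal) :
  ord_lt j (Sg i c) -> exists c', olt i c' c /\ ord_at j i c'.
Proof.
  intros [d Hd]. destruct d as [d pd]. exists d. split; [exact pd|].
  unfold ord_at. apply (iso_trans _ _ _ _ _ _ Hd).
  exists (fun y : seg_carrier (Sg i c) (exist _ d pd) =>
            exist (fun x => olt i x d) (proj1_sig (proj1_sig y)) (proj2_sig y)).
  exists (fun x : seg_carrier i d =>
            exist (fun y : Sg i c => seg_lt i c y (exist _ d pd))
              (exist (fun x => olt i x c) (proj1_sig x)
                 (olt_trans i _ _ _ (proj2_sig x) pd)) (proj2_sig x)).
  repeat split.
  - intros [[y py] qy]. simpl.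
    assert (E : olt_trans i y d c qy pd = py) by apply proof_irrelevance.
    rewrite E. reflexivity.
  - intros [y py]. reflexivity.
  - intros H. exact H.
  - intros H. exact H.
Qed.

Lemma ext_cotrans x y z : ext_lt x y -> ext_lt x z \/ ext_lt z y.
Proof.
  destruct x as [[]|], y as [[]|], z as [[]|]; simpl; tauto.
Qed.

Lemma ext_tri x z : x <> z -> ext_lt x z \/ ext_lt z x.
Proof.
  destruct x as [[]|], z as [[]|]; simpl; try tauto; intros H; exfalso; apply H; reflexivity.
Qed.

Lemma wf_min (A : Type) (R : A -> A -> Prop) (P : A -> Prop) :
  well_founded R -> (exists c, P c) -> exists c, P c /\ forall c', R c' c -> ~ P c'.
Proof.
  intros Hwf [c0 Hc0]. apply NNPP. intros Hn. apply (fun H => H c0 Hc0).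
  intros c. induction c as [c IH] using (well_founded_ind Hwf).
  intros Pc. apply Hn. exists c. split; auto.
Qed.

Theorem mainTheorem6 :
  forall u v w : InSeq, inseq_lt u v -> inseq_lt u w \/ inseq_lt w v.
Proof.
  intros u v w [i [Hag [x [y [Hx [Hy Hxy]]]]]].
  destruct (classic (exists c : i, ~ agree u w (Sg i c))) as [Hex | Hnex].
  - destruct (wf_min _ _ _ (olt_wf i) Hex) as [c [Hc Hmin]].
    set (k := Sg i c).
    assert (Hki : ord_lt k i) by (exists c; apply iso_refl).
    assert (Hbw : forall j, ord_lt j k -> agree u w j).
    { intros j Hj. destruct (lt_seg i c j Hj) as [c' [Hc' Hj']].
      pose proof (NNPP _ (Hmin c' Hc')) as A.
      apply (agree_iso u w (Sg i c') j (iso_sym _ _ _ _ Hj') A). }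
    assert (Hbv : forall j, ord_lt j k -> agree u v j).
    { intros j Hj. destruct (lt_seg i c j Hj) as [c' [Hc' Hj']].
      intros x'; apply Hag. exists c'. exact Hj'. }
    pose proof (Hag k Hki) as Huvk.
    destruct (term_total u k) as [x0 Hx0].
    destruct (term_total w k) as [z0 Hz0].
    assert (Hne : x0 <> z0).
    { intros E. subst z0. apply Hc. intros x'. split; intros H.
      - rewrite <- (term_func _ _ _ _ Hx0 H). exact Hz0.
      - rewrite <- (term_func _ _ _ _ Hz0 H). exact Hx0. }
    destruct (ext_tri _ _ Hne) as [Hl|Hl].
    + left. exists k. split; [exact Hbw|]. exists x0, z0. auto.
    + right. exists k. split.
      * intros j Hj x'. rewrite <- (Hbw j Hj x'). apply (Hbv j Hj x').
      * exists z0, x0. split; [exact Hz0|]. split; [apply Huvk; exact Hx0|exact Hl].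
  - assert (Hall : forall j, ord_lt j i -> agree u w j).
    { intros j [c Hc].
      assert (A : agree u w (Sg i c)).
      { apply NNPP. intros Hn. apply Hnex. exists c. exact Hn. }
      apply (agree_iso u w (Sg i c) j (iso_sym _ _ _ _ Hc) A). }
    destruct (term_total w i) as [z Hz].
    destruct (ext_cotrans _ _ z Hxy) as [Hl|Hl].
    + left. exists i. split; [exact Hall|]. exists x, z. auto.
    + right. exists i. split.
      * intros j Hj x'. rewrite <- (Hall j Hj x'). apply (Hag j Hj x').
      * exists z, y. auto.
Qed.
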